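(* Let $T$ be a complete theory with monster model $\mathcal{U}$, $\mu\in\mathfrak{M}_x(\mathcal{U})$, $\nu\in\mathfrak{M}_y(\mathcal{U})$, and $f:\mathcal{U}^y\to\mathcal{U}^z$ a definable map (with parameters). If $\mu\geq_{\mathbb{E}}\nu$, then $\mu\geq_{\mathbb{E}}f(\nu)$.
   Context: For $C\subseteq\mathcal{U}$, $\mathcal{L}_x(C)$ is the Boolean algebra of formulas in $x$ with parameters from $C$ modulo $T$, embedded in $\mathcal{L}_{xy}(C)$ via $\varphi(x)\mapsto\varphi(x)\wedge y=y$; $\mathfrak{M}_x(C)$ is the set of finitely additive probability measures on $\mathcal{L}_x(C)$. For $\omega\in\mathfrak{M}_{xy}(C)$, $\pi_x(\omega)(\varphi(x))=\omega(\varphi(x)\wedge y=y)$ (similarly $\pi_y$); $\omega|_D$ is restriction. The push-forward is $f(\nu)(\psi(z))=\nu(\psi(f(y)))$. For small $A$, $\mu\geq_{\mathbb{E},A}\nu$ means there is $\lambda\in\mathfrak{M}_{xy}(A)$ with $\pi_x(\lambda)=\mu|_A$ such that every $\omega\in\mathfrak{M}_{xy}(\mathcal{U})$ with $\omega|_A=\lambda$ and $\pi_x(\omega)=\mu$ satisfies $\pi_y(\omega)=\nu$; $\mu\geq_{\mathbb{E}}\nu$ means this holds for some small $A$ (defined analogously for other variable tuples). *)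

(* Defs.v *)
From mathcomp Require Import all_boot.
From Stdlib Require Import Reals.
From Stdlib Require List.

Set Implicit Arguments.
Unset Strict Implicit.
Unset Printing Implicit Defensive.

Record signature := Signature {
  fsym : Type; farity : fsym -> nat;
  rsym : Type; rarity : rsym -> nat }.

Record structure (L : signature) := Structure {
  carrier :> Type;
  finterp : forall f : fsym L, ('I_(farity f) -> carrier) -> carrier;
  rinterp : forall r : rsym L, ('I_(rarity r) -> carrier) -> Prop }.

Inductive term (L : signature) (P : Type) : Type :=
| tvar (i : nat)
| tpar (p : P)
| tapp (f : fsym L) (args : 'I_(farity f) -> term L P).

Inductive formula (L : signature) (P : Type) : Type :=
| feq (t1 t2 : term L P)
| frel (r : rsym L) (args : 'I_(rarity r) -> term L P)
| fneg (phi : formula L P)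
| fand (phi psi : formula L P)
| fex (i : nat) (phi : formula L P).

Section Semantics.
Variables (L : signature) (M : structure L).

Fixpoint eval_term (s : nat -> M) (t : term L M) : M :=
  match t with
  | tvar i => s i
  | tpar p => p
  | tapp f args => @finterp L M f (fun j => eval_term s (args j))
  end.

Definition upd (s : nat -> M) (i : nat) (a : M) : nat -> M :=
  fun j => if j == i then a else s j.

Fixpoint sat (s : nat -> M) (phi : formula L M) : Prop :=
  match phi with
  | feq t1 t2 => eval_term s t1 = eval_term s t2
  | frel r args => @rinterp L M r (fun j => eval_term s (args j))
  | fneg phi => ~ sat s phi
  | fand phi psi => sat s phi /\ sat s psi
  | fex i phi => exists a : M, sat (upd s i a) phi
  end.

Fixpoint tparams_in (A : M -> Prop) (t : term L M) : Prop :=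
  match t with
  | tvar _ => True
  | tpar p => A p
  | tapp f args => forall j, tparams_in A (args j)
  end.

Fixpoint fparams_in (A : M -> Prop) (phi : formula L M) : Prop :=
  match phi with
  | feq t1 t2 => tparams_in A t1 /\ tparams_in A t2
  | frel r args => forall j, tparams_in A (args j)
  | fneg phi => fparams_in A phi
  | fand phi psi => fparams_in A phi /\ fparams_in A psi
  | fex _ phi => fparams_in A phi
  end.

(** A subset X of M^n is definable over A: it is the set defined by a formula
    with parameters in A whose free variables are among 0..n-1 (variable i
    is the i-th coordinate). *)
Definition definable (n : nat) (A : M -> Prop) (X : ('I_n -> M) -> Prop) : Prop :=
  exists phi : formula L M, fparams_in A phi /\
    forall s : nat -> M, X (fun i : 'I_n => s (nat_of_ord i)) <-> sat s phi.

Definition setTM : M -> Prop := fun _ => True.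

(** * Monster model (kappa = |K|) *)

Definition small (K : Type) (A : M -> Prop) : Prop :=
  ~ exists g : K -> M, injective g /\ forall k, A (g k).

Definition saturated (K : Type) : Prop :=
  forall (A : M -> Prop), small K A ->
  forall (n : nat) (p : (('I_n -> M) -> Prop) -> Prop),
    (forall X, p X -> definable A X) ->
    (forall l : list (('I_n -> M) -> Prop),
        (forall X, List.In X l -> p X) ->
        exists a, forall X, List.In X l -> X a) ->
    exists a, forall X, p X -> X a.

Definition automorphism (sigma : M -> M) : Prop :=
  bijective sigma /\
  (forall f args, sigma (@finterp L M f args) = @finterp L M f (sigma \o args)) /\
  (forall r args, @rinterp L M r args <-> @rinterp L M r (sigma \o args)).

Definition strongly_homogeneous (K : Type) : Prop :=
  forall (I : Type) (a b : I -> M),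
    ~ (exists g : K -> I, injective g) ->
    (forall phi : formula L M, fparams_in (fun _ => False) phi ->
       forall g : nat -> I, sat (a \o g) phi <-> sat (b \o g) phi) ->
    exists sigma, automorphism sigma /\ forall i, sigma (a i) = b i.

Definition monster (K : Type) : Prop :=
  (exists g : nat -> K, injective g) /\ saturated K /\ strongly_homogeneous K.

Local Open Scope R_scope.

(* finitely additive probability measure on the Boolean algebra of
   C-definable subsets of M^n (= L_x(C), |x| = n, formulas modulo T) *)
Definition keisler (n : nat) (C : M -> Prop) (mu : (('I_n -> M) -> Prop) -> R) : Prop :=
  (forall X, definable C X -> 0 <= mu X) /\
  mu (fun _ => True) = 1 /\
  (forall X Y, definable C X -> definable C Y ->
     (forall a, X a <-> Y a) -> mu X = mu Y) /\
  (forall X Y, definable C X -> definable C Y ->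
     (forall a, ~ (X a /\ Y a)) ->
     mu (fun a => X a \/ Y a) = mu X + mu Y).

(* coordinates of M^(n+m): the first n are x, the last m are y *)
Definition xpart n m (a : 'I_(n + m) -> M) : 'I_n -> M := fun i => a (lshift m i).
Definition ypart n m (a : 'I_(n + m) -> M) : 'I_m -> M := fun j => a (rshift n j).

(* phi(x) /\ y = y   and   x = x /\ psi(y) *)
Definition cylx n m (X : ('I_n -> M) -> Prop) : ('I_(n + m) -> M) -> Prop :=
  fun a => X (xpart a).
Definition cyly n m (Y : ('I_m -> M) -> Prop) : ('I_(n + m) -> M) -> Prop :=
  fun a => Y (ypart a).

Definition keisler_ge_at (n m : nat) (A : M -> Prop)
    (mu : (('I_n -> M) -> Prop) -> R) (nu : (('I_m -> M) -> Prop) -> R) : Prop :=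
  exists lam : (('I_(n + m) -> M) -> Prop) -> R,
    keisler A lam /\
    (forall X, definable A X -> lam (@cylx n m X) = mu X) /\
    forall om : (('I_(n + m) -> M) -> Prop) -> R,
      keisler setTM om ->
      (forall Z, definable A Z -> om Z = lam Z) ->
      (forall X, definable setTM X -> om (@cylx n m X) = mu X) ->
      forall Y, definable setTM Y -> om (@cyly n m Y) = nu Y.

Definition keisler_ge (K : Type) (n m : nat)
    (mu : (('I_n -> M) -> Prop) -> R) (nu : (('I_m -> M) -> Prop) -> R) : Prop :=
  exists A : M -> Prop, small K A /\ keisler_ge_at A mu nu.

Definition definable_map (m k : nat) (f : ('I_m -> M) -> ('I_k -> M)) : Prop :=
  definable setTM (fun a : 'I_(m + k) -> M =>
    forall j : 'I_k, f (xpart a) j = ypart a j).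

Definition pushforward (m k : nat) (f : ('I_m -> M) -> ('I_k -> M))
    (nu : (('I_m -> M) -> Prop) -> R) : (('I_k -> M) -> Prop) -> R :=
  fun Y => nu (fun b => Y (f b)).

End Semantics.

(* Main.v *)
Require Import Defs.
From mathcomp Require Import all_boot zify.
From Stdlib Require Import Reals Lra ClassicalDescription IndefiniteDescription FunctionalExtensionality PropExtensionality Classical.
From mathcomp.classical Require Import classical_sets.

Set Implicit Arguments.
Unset Strict Implicit.
Unset Printing Implicit Defensive.

Module ExtM.


Local Open Scope R_scope.

Definition pb (P : Prop) : bool :=
  if excluded_middle_informative P then true else false.
Lemma pbT (P : Prop) : P -> pb P = true.
Proof. by rewrite /pb; case: excluded_middle_informative. Qed.
Lemma pbF (P : Prop) : ~ P -> pb P = false.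
Proof. by rewrite /pb; case: excluded_middle_informative. Qed.
Lemma pbE (P : Prop) : pb P = true <-> P.
Proof. by rewrite /pb; case: excluded_middle_informative. Qed.

Lemma seteq (U : Type) (X Y : U -> Prop) : (forall u, X u <-> Y u) -> X = Y.
Proof. move=> H; apply: functional_extensionality => u; exact: propositional_extensionality. Qed.

Section Ext.
Variable U : Type.
Notation set := (U -> Prop).

Definition Alg (B : set -> Prop) :=
  B (fun _ => True) /\ (forall X, B X -> B (fun u => ~ X u)) /\
  (forall X Y, B X -> B Y -> B (fun u => X u /\ Y u)).

Definition Meas (B : set -> Prop) (m : set -> R) :=
  m (fun _ => True) = 1 /\ (forall X, B X -> 0 <= m X) /\
  (forall X Y, B X -> B Y -> (forall u, ~ (X u /\ Y u)) ->
     m (fun u => X u \/ Y u) = m X + m Y).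

Lemma AlgF B : Alg B -> B (fun _ => False).
Proof.
move=> [HT [HC HI]]; have := HC _ HT.
by have -> : (fun u : U => ~ True) = (fun _ => False) by apply: seteq => u; tauto.
Qed.

Lemma AlgU B X Y : Alg B -> B X -> B Y -> B (fun u => X u \/ Y u).
Proof.
move=> [HT [HC HI]] BX BY.
have -> : (fun u => X u \/ Y u) = (fun u => ~ ((fun u => ~ X u) u /\ (fun u => ~ Y u) u)).
  by apply: seteq => u /=; tauto.
by apply: (HC); apply: (HI); apply: (HC).
Qed.

Lemma MeasF B m : Alg B -> Meas B m -> m (fun _ => False) = 0.
Proof.
move=> HB [H1 [H0 HA]].
have := HA _ _ (AlgF HB) (AlgF HB) ltac:(tauto).
have -> : (fun u : U => False \/ False) = (fun _ => False) by apply: seteq => u; tauto.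
lra.
Qed.

Lemma MeasC B m X : Alg B -> Meas B m -> B X -> m (fun u => ~ X u) = 1 - m X.
Proof.
move=> HB [H1 [H0 HA]] BX.
have BC : B (fun u => ~ X u) by case: HB => _ [] C _; apply: (C).
have := HA _ _ BX BC ltac:(firstorder).
have -> : (fun u => X u \/ ~ X u) = (fun _ => True) by apply: seteq => u; tauto.
lra.
Qed.

Lemma MeasMono B m X Y : Alg B -> Meas B m -> B X -> B Y -> (forall u, X u -> Y u) -> m X <= m Y.
Proof.
move=> HB Hm BX BY XY.
have BC : B (fun u => Y u /\ ~ X u).
  by case: HB => _ [] C I; apply: (I) => //; apply: (C).
case: (Hm) => _ [H0 HA].
have := HA _ _ BX BC ltac:(firstorder).
have -> : (fun u => X u \/ (Y u /\ ~ X u)) = Y.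
  apply: seteq => u; split; [firstorder|]. move=> Yu; case: (classic (X u)); tauto.
move=> ->; have := H0 _ BC; lra.
Qed.

Definition cnt (l : seq set) (u : U) : nat := count (fun X => pb (X u)) l.
Definition chi (X : set) (u : U) : nat := if pb (X u) then 1%nat else 0%nat.
Fixpoint sumR (l : seq R) : R := match l with [::] => 0 | x :: l => x + sumR l end.

Lemma cnt_cons X l u : cnt (X :: l) u = (chi X u + cnt l u)%nat.
Proof. by rewrite /cnt /chi /=; case: pb. Qed.
Lemma cnt_map_cons (x : set * R) l u : cnt (map fst (x :: l)) u = (chi x.1 u + cnt (map fst l) u)%nat.
Proof. by rewrite /cnt /chi /=; case: pb. Qed.
Lemma cnt_cat l1 l2 u : cnt (l1 ++ l2) u = (cnt l1 u + cnt l2 u)%nat.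
Proof. by rewrite /cnt count_cat. Qed.
Lemma sumR_cat l1 l2 : sumR (l1 ++ l2) = sumR l1 + sumR l2.
Proof. elim: l1 => [|x l IH] /=; lra. Qed.

Definition lev (l : seq set) (k : nat) : set := fun u => (k <= cnt l u)%nat.

Lemma lev0 l : lev l 0 = (fun _ => True).
Proof. by apply: seteq => u; rewrite /lev. Qed.

Lemma lev_nil k : lev [::] k.+1 = (fun _ => False).
Proof. by apply: seteq => u; rewrite /lev. Qed.

Lemma lev_cons t l k : lev (t :: l) k.+1 = (fun u => lev l k.+1 u \/ (lev l k u /\ t u)).
Proof.
apply: seteq => u; rewrite /lev cnt_cons /chi.
case: (classic (t u)) => tu; [rewrite pbT //| rewrite pbF //].
  split; [move=> H; case: (leqP k.+1 (cnt l u)) => H'; [by left| right; split=>//; lia]|].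
  case=> [H|[H _]]; lia.
split; [move=> H; left; lia| case=> [H|[_ H]] //; lia].
Qed.

Lemma levB B l k : Alg B -> (forall X, List.In X l -> B X) -> B (lev l k).
Proof.
move=> HB; elim: l k => [|t l IH] k Hl.
  case: k => [|k]; first by rewrite lev0; case: HB.
  by rewrite lev_nil; apply: AlgF.
case: k => [|k]; first by rewrite lev0; case: HB.
rewrite lev_cons; apply: AlgU => //.
  apply: IH => X HX; apply: (Hl); by right.
case: HB => _ [_ HI]; apply: (HI); last by apply: (Hl); left.
apply: IH => X HX; apply: (Hl); by right.
Qed.

Fixpoint sumk (N : nat) (f : nat -> R) : R :=
  match N with 0 => 0 | S N' => sumk N' f + f (S N') end.

Lemma sumk_tel N (d : nat -> R) : sumk N (fun k => d (k.-1) - d k) = d 0%nat - d N.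
Proof. elim: N => [|N IH] /=; lra. Qed.
Lemma sumkD N f g : sumk N (fun k => f k + g k) = sumk N f + sumk N g.
Proof. elim: N => [|N IH] /=; lra. Qed.
Lemma sumk_le N f g : (forall k, f k <= g k) -> sumk N f <= sumk N g.
Proof. move=> H; elim: N => [|N IH] /=; [lra|]. have := H N.+1; lra. Qed.
Lemma sumk_ext N f g : (forall k, f k.+1 = g k.+1) -> sumk N f = sumk N g.
Proof. move=> H; elim: N => [|N IH] //=; rewrite IH H //. Qed.
Lemma sumk0 N : sumk N (fun _ => 0) = 0.
Proof. elim: N => [|N IH] /=; lra. Qed.

Lemma lev_big l k : (size l < k)%nat -> lev l k = (fun _ => False).
Proof.
move=> H; apply: seteq => u; rewrite /lev; split => //.
have : (cnt l u <= size l)%nat by rewrite /cnt count_size.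
lia.
Qed.

Lemma sum_lev B m l N : Alg B -> Meas B m -> (forall X, List.In X l -> B X) ->
  (size l <= N)%nat -> sumR (map m l) = sumk N (fun k => m (lev l k)).
Proof.
move=> HB Hm; elim: l N => [|t l IH] N Hl HN /=.
  rewrite -(sumk0 N); apply: sumk_ext => k.
  by rewrite lev_nil (MeasF HB Hm).
have Bl : forall X, List.In X l -> B X by move=> X HX; apply: (Hl); right.
have Bt : B t by apply: (Hl); left.
have HI : forall X Y, B X -> B Y -> B (fun u => X u /\ Y u) by case: HB => _ [].
have HC : forall X, B X -> B (fun u => ~ X u) by case: HB => _ [].
rewrite (IH N Bl) /=; last by move: HN => /=; lia.
pose d k := m (fun u => lev l k u /\ t u).
have step : forall k, m (lev (t :: l) k.+1) = m (lev l k.+1) + (d k - d k.+1).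
  move=> k; rewrite lev_cons.
  have Lk := levB k.+1 HB Bl; have Lk' := levB k HB Bl.
  have sub : forall u, lev l k.+1 u -> lev l k u by move=> u; rewrite /lev; lia.
  case: (Hm) => _ [_ HA].
  have E1 : (fun u => lev l k.+1 u \/ lev l k u /\ t u) =
            (fun u => lev l k.+1 u \/ ((lev l k u /\ t u) /\ ~ lev l k.+1 u)).
    apply: seteq => u; case: (classic (lev l k.+1 u)); tauto.
  have E2 : (fun u => lev l k u /\ t u) =
            (fun u => (lev l k.+1 u /\ t u) \/ ((lev l k u /\ t u) /\ ~ lev l k.+1 u)).
    apply: seteq => u; case: (classic (lev l k.+1 u)) => H; [have := sub u H|]; tauto.
  have BD : B (fun u => (lev l k u /\ t u) /\ ~ lev l k.+1 u).
    by apply: (HI); [apply: (HI)|apply: (HC)].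
  rewrite /d E1 (HA _ _ Lk BD); last by move=> u; tauto.
  rewrite E2 (HA _ _ (HI _ _ Lk Bt) BD); last by move=> u; tauto.
  lra.
have -> : sumk N (fun k => m (lev (t :: l) k)) =
          sumk N (fun k => m (lev l k) + (d k.-1 - d k)).
  apply: sumk_ext => k; rewrite step /=; lra.
rewrite sumkD sumk_tel.
have -> : d N = 0.
  rewrite /d lev_big; last by move: HN => /=; lia.
  have -> : (fun u : U => False /\ t u) = (fun _ => False) by apply: seteq => u; tauto.
  exact: MeasF HB Hm.
have -> : d 0%nat = m t by rewrite /d lev0; congr m; apply: seteq => u; tauto.
lra.
Qed.


Definition HT (G : set * R -> Prop) := forall ls lt : seq (set * R),
  (forall x, List.In x ls -> G x) -> (forall x, List.In x lt -> G x) ->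
  (forall u, (cnt (map fst ls) u <= cnt (map fst lt) u)%nat) ->
  sumR (map snd ls) <= sumR (map snd lt).

Lemma chiC X u : (chi X u + chi (fun u => ~ X u) u)%nat = 1%nat.
Proof.
rewrite /chi; case: (classic (X u)) => H.
  by rewrite pbT // pbF.
by rewrite pbF // pbT.
Qed.
Lemma chiT u : chi (fun _ => True) u = 1%nat.
Proof. by rewrite /chi pbT. Qed.
Lemma chi01 X u : chi X u = 0%nat \/ chi X u = 1%nat.
Proof. rewrite /chi; case: pb; tauto. Qed.

Section Mixed.
Variables (B1 B2 : set -> Prop) (m1 m2 : set -> R).
Hypotheses (HB1 : Alg B1) (HB2 : Alg B2) (Hm1 : Meas B1 m1) (Hm2 : Meas B2 m2).
Hypothesis compat : forall X Y, B1 X -> B2 Y -> (forall u, X u -> Y u) -> m1 X <= m2 Y.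

Definition G0 (x : set * R) := (B1 x.1 /\ x.2 = m1 x.1) \/ (B2 x.1 /\ x.2 = m2 x.1).

Lemma conv_left ls : (forall x, List.In x ls -> G0 x) ->
  exists l1 l2, (forall X, List.In X l1 -> B1 X) /\ (forall X, List.In X l2 -> B2 X) /\
   (forall u, (cnt (map fst ls) u + cnt l2 u = cnt l1 u)%nat) /\
   sumR (map snd ls) + sumR (map m2 l2) = sumR (map m1 l1).
Proof.
elim: ls => [|[X v] ls IH] H.
  exists [::], [::]; split => //; split => //; split => //=; lra.
have [//|l1 [l2 [H1 [H2 [Hc Hs]]]]] := IH; first by move=> x Hx; apply: (H); right.
have [[BX Hv]|[BX Hv]] := H (X, v) (or_introl erefl); rewrite /= in BX Hv; subst v.
  exists (X :: l1), l2; split; first by move=> Y [<-|]; [|apply: H1].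
  split => //; split; first by move=> u; rewrite cnt_map_cons !cnt_cons -Hc /=; lia.
  rewrite /=; lra.
exists ((fun _ => True) :: l1), ((fun u => ~ X u) :: l2).
split; first by move=> Y [<-|]; [case: HB1|apply: H1].
split; first by move=> Y [<-|]; [case: HB2 => _ [C _]; apply: C|apply: H2].
split; first by move=> u; rewrite cnt_map_cons !cnt_cons -Hc /= chiT; have := chiC X u; lia.
rewrite /= (MeasC HB2 Hm2 BX); case: Hm1 => ->; lra.
Qed.

Lemma conv_right lt : (forall x, List.In x lt -> G0 x) ->
  exists l1 l2, (forall X, List.In X l1 -> B1 X) /\ (forall X, List.In X l2 -> B2 X) /\
   (forall u, (cnt (map fst lt) u + cnt l1 u = cnt l2 u)%nat) /\
   sumR (map snd lt) + sumR (map m1 l1) = sumR (map m2 l2).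
Proof.
elim: lt => [|[X v] lt IH] H.
  exists [::], [::]; split => //; split => //; split => //=; lra.
have [//|l1 [l2 [H1 [H2 [Hc Hs]]]]] := IH; first by move=> x Hx; apply: (H); right.
have [[BX Hv]|[BX Hv]] := H (X, v) (or_introl erefl); rewrite /= in BX Hv; subst v.
  exists ((fun u => ~ X u) :: l1), ((fun _ => True) :: l2).
  split; first by move=> Y [<-|]; [case: HB1 => _ [C _]; apply: C|apply: H1].
  split; first by move=> Y [<-|]; [case: HB2|apply: H2].
  split; first by move=> u; rewrite cnt_map_cons !cnt_cons -Hc /= chiT; have := chiC X u; lia.
  rewrite /= (MeasC HB1 Hm1 BX); case: Hm2 => ->; lra.
exists l1, (X :: l2); split => //.
split; first by move=> Y [<-|]; [|apply: H2].
split; first by move=> u; rewrite cnt_map_cons !cnt_cons -Hc /=; lia.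
rewrite /=; lra.
Qed.

Lemma compare_lists l1 l2 : (forall X, List.In X l1 -> B1 X) -> (forall X, List.In X l2 -> B2 X) ->
  (forall u, (cnt l1 u <= cnt l2 u)%nat) -> sumR (map m1 l1) <= sumR (map m2 l2).
Proof.
move=> H1 H2 Hc.
rewrite (sum_lev (N := (size l1 + size l2)%nat) HB1 Hm1 H1); last by lia.
rewrite (sum_lev (N := (size l1 + size l2)%nat) HB2 Hm2 H2); last by lia.
apply: sumk_le => k; apply: compat; [exact: levB|exact: levB|].
move=> u; rewrite /lev => h; have := Hc u; lia.
Qed.

Lemma HT_G0 : HT G0.
Proof.
move=> ls lt Hls Hlt Hc.
have [l1a [l2a [H1a [H2a [Ca Sa]]]]] := conv_left Hls.
have [l1b [l2b [H1b [H2b [Cb Sb]]]]] := conv_right Hlt.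
have h : sumR (map m1 (l1a ++ l1b)) <= sumR (map m2 (l2a ++ l2b)).
apply: compare_lists.
- by move=> X /List.in_app_iff [] ?; [apply: H1a|apply: H1b].
- by move=> X /List.in_app_iff [] ?; [apply: H2a|apply: H2b].
- move=> u; rewrite !cnt_cat; have := Ca u; have := Cb u; have := Hc u; lia.
move: h; rewrite !map_cat !sumR_cat => h; lra.
Qed.

End Mixed.

Fixpoint rep (n : nat) (l : seq (set * R)) : seq (set * R) :=
  match n with 0 => [::] | S n => l ++ rep n l end.
Lemma rep_cnt n l u : cnt (map fst (rep n l)) u = (n * cnt (map fst l) u)%nat.
Proof. elim: n => [|n IH] //=; rewrite map_cat cnt_cat IH; lia. Qed.
Lemma rep_sum n l : sumR (map snd (rep n l)) = INR n * sumR (map snd l).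
Proof. elim: n => [|n IH]; first by rewrite /=; lra. rewrite S_INR [rep n.+1 l]/= map_cat sumR_cat IH; nra. Qed.
Lemma rep_in n l x : List.In x (rep n l) -> List.In x l.
Proof. elim: n => [|n IH] //= /List.in_app_iff []; auto. Qed.

Section OneStep.
Variables (A : set * R -> Prop) (e : set).
Hypotheses (HA : HT A) (AT : A ((fun _ => True), 1)).

Definition inA (l : seq (set * R)) := forall x, List.In x l -> A x.

Definition Lo r := exists p ls lt, (0 < p)%nat /\ inA ls /\ inA lt /\
  (forall u, (cnt (map fst ls) u <= p * chi e u + cnt (map fst lt) u)%nat) /\
  r * INR p = sumR (map snd ls) - sumR (map snd lt).
Definition Up r := exists p ls lt, (0 < p)%nat /\ inA ls /\ inA lt /\
  (forall u, (p * chi e u + cnt (map fst ls) u <= cnt (map fst lt) u)%nat) /\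
  r * INR p = sumR (map snd lt) - sumR (map snd ls).

Lemma Lo_Up r r' : Lo r -> Up r' -> r <= r'.
Proof.
move=> [a [A1 [B1 [a0 [iA1 [iB1 [c1 s1]]]]]]] [b [A2 [B2 [b0 [iA2 [iB2 [c2 s2]]]]]]].
have := HA (ls := rep b A1 ++ rep a A2) (lt := rep b B1 ++ rep a B2).
rewrite !map_cat !sumR_cat !rep_sum.
have ia : forall l, inA l -> forall n, inA (rep n l) by move=> l il n x /rep_in; apply: il.
have hh : (forall x, List.In x (rep b A1 ++ rep a A2) -> A x).
  by move=> x /List.in_app_iff []; [apply: ia|apply: ia].
have hh' : (forall x, List.In x (rep b B1 ++ rep a B2) -> A x).
  by move=> x /List.in_app_iff []; [apply: ia|apply: ia].
move=> /(_ hh hh') H.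
have {}H : INR b * sumR (map snd A1) + INR a * sumR (map snd A2) <=
     INR b * sumR (map snd B1) + INR a * sumR (map snd B2).
  apply: H => u; rewrite !cnt_cat !rep_cnt.
  have := c1 u; have := c2 u; case: (chi01 e u) => ->; nia.
have ha : 0 < INR a by apply: lt_0_INR; apply/ltP.
have hb : 0 < INR b by apply: lt_0_INR; apply/ltP.
have : r * INR a * INR b <= r' * INR a * INR b by nra.
move=> h; have hab : 0 < INR a * INR b by nra.
nra.
Qed.

Lemma Lo0 : Lo 0.
Proof.
exists 1%nat, [::], [::]; do 3!split => //=; split; last lra.
by move=> u; lia.
Qed.

Lemma Up1 : Up 1.
Proof.
exists 1%nat, [::], [:: ((fun _ => True), 1)]; split => //; split => //.
split; first by move=> x [<-|].
split; last by rewrite /=; lra.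
by move=> u; rewrite /cnt /chi /= (pbT (P:=True)) //; case: pb.
Qed.

Lemma one_step : (forall v, ~ A (e, v)) -> exists v, HT (fun x => A x \/ x = (e, v)).
Proof.
move=> Ne.
have bd : bound Lo by exists 1; move=> r Lr; exact: Lo_Up Lr Up1.
have [v [vub vlub]] := completeness Lo bd (ex_intro _ 0 Lo0).
have vLo : forall r, Lo r -> r <= v by move=> r Lr; apply: vub.
have vUp : forall r, Up r -> v <= r.
  by move=> r Ur; apply: vlub => r' Lr'; exact: Lo_Up Lr' Ur.
exists v.
have split_l : forall ls, (forall x, List.In x ls -> A x \/ x = (e, v)) ->
  exists p ls0, inA ls0 /\ (forall u, cnt (map fst ls) u = p * chi e u + cnt (map fst ls0) u)%nat /\
    sumR (map snd ls) = INR p * v + sumR (map snd ls0).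
  elim => [|x ls IH] H.
    by exists 0%nat, [::]; split => //; split => //=; lra.
  have [|p [ls0 [i0 [c0 s0]]]] := IH; first by move=> y Hy; apply: H; right.
  case: (H x (or_introl erefl)) => [Ax|->].
    exists p, (x :: ls0); split; first by move=> y [<-|]; [|apply: i0].
    split; first by move=> u; rewrite !cnt_map_cons c0; lia.
    by rewrite /= s0; lra.
  exists p.+1, ls0; split => //; split; first by move=> u; rewrite cnt_map_cons c0 mulSn /=; lia.
  by rewrite S_INR /= s0; nra.
move=> ls lt Hls Hlt Hc.
have [p [ls0 [i1 [c1 s1]]]] := split_l ls Hls.
have [q [lt0 [i2 [c2 s2]]]] := split_l lt Hlt.
rewrite s1 s2.
case: (ltngtP p q) => pq.
- pose r := (sumR (map snd ls0) - sumR (map snd lt0)) / INR (q - p).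
  have hq : 0 < INR (q - p) by apply: lt_0_INR; apply/ltP; lia.
  have : Lo r.
    exists (q - p)%nat, ls0, lt0; split; first by lia.
    do 2!split => //; split; last by rewrite /r; field; lra.
    move=> u; have := Hc u; rewrite c1 c2; case: (chi01 e u) => ->; lia.
  move=> /vLo; rewrite /r => h.
  have h2 : sumR (map snd ls0) - sumR (map snd lt0) <= v * INR (q - p).
    have := Rmult_le_compat_r (INR (q - p)) _ _ (Rlt_le _ _ hq) h.
    by rewrite /Rdiv Rmult_assoc Rinv_l; [rewrite Rmult_1_r|lra].
  rewrite minus_INR in h2; last by apply/leP; lia.
  nra.
- pose r := (sumR (map snd lt0) - sumR (map snd ls0)) / INR (p - q).
  have hq : 0 < INR (p - q) by apply: lt_0_INR; apply/ltP; lia.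
  have : Up r.
    exists (p - q)%nat, ls0, lt0; split; first by lia.
    do 2!split => //; split; last by rewrite /r; field; lra.
    move=> u; have := Hc u; rewrite c1 c2; case: (chi01 e u) => ->; lia.
  move=> /vUp; rewrite /r => h.
  have h2 : v * INR (p - q) <= sumR (map snd lt0) - sumR (map snd ls0).
    have := Rmult_le_compat_r (INR (p - q)) _ _ (Rlt_le _ _ hq) h.
    by rewrite /Rdiv Rmult_assoc Rinv_l; [rewrite Rmult_1_r|lra].
  rewrite minus_INR in h2; last by apply/leP; lia.
  nra.
- subst q.
  have : sumR (map snd ls0) <= sumR (map snd lt0).
    apply: HA => // u; have := Hc u; rewrite c1 c2; lia.
  lra.
Qed.

End OneStep.


Lemma chain_list (F : (set * R -> Prop) -> Prop) (tot : total_on F subset) (l : seq (set * R)) :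
  (forall x, List.In x l -> bigcup F (fun A => A) x) ->
  l = [::] \/ exists A, F A /\ forall x, List.In x l -> A x.
Proof.
elim: l => [|x l IH] H; first by left.
right; have [A1 FA1 A1x] := H x (or_introl erefl).
case: IH => [y Hy|->|[A2 [FA2 HA2]]]; first by apply: H; right.
  by exists A1; split => // y [<-|].
case: (tot _ _ FA1 FA2) => sub.
  by exists A2; split => // y [<-|Hy]; [apply: sub|apply: HA2].
by exists A1; split => // y [<-|Hy]; [|apply: sub; apply: HA2].
Qed.

Lemma HT_fun A X v w : HT A -> A (X, v) -> A (X, w) -> v = w.
Proof.
move=> H Av Aw.
have h1 := H [:: (X, v)] [:: (X, w)].
have h2 := H [:: (X, w)] [:: (X, v)].
have : v + 0 <= w + 0.
  by apply: h1; [move=> x [<-|]|move=> x [<-|]|move=> u; apply: leqnn].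
have : w + 0 <= v + 0.
  by apply: h2; [move=> x [<-|]|move=> x [<-|]|move=> u; apply: leqnn].
lra.
Qed.

Theorem ext_thm B1 B2 m1 m2 : Alg B1 -> Alg B2 -> Meas B1 m1 -> Meas B2 m2 ->
  (forall X Y, B1 X -> B2 Y -> (forall u, X u -> Y u) -> m1 X <= m2 Y) ->
  exists m, Meas (fun _ => True) m /\ (forall X, B1 X -> m X = m1 X) /\
            (forall X, B2 X -> m X = m2 X).
Proof.
move=> HB1 HB2 Hm1 Hm2 compat.
pose G := G0 B1 B2 m1 m2.
have HG : HT G := HT_G0 HB1 HB2 Hm1 Hm2 compat.
pose P' (A : set * R -> Prop) := HT A /\ (A = (fun _ => False) \/ forall x, G x -> A x).
have GT : G ((fun _ => True), 1).
  by left; split; [case: HB1|case: Hm1].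
have [A [[HA HA0] Amax]] : exists A, P' A /\ forall B, proper A B -> ~ P' B.
  apply: Zorn_bigcup => F FP tot; split.
    move=> ls lt Hls Hlt Hc.
    case: (chain_list tot (l := ls ++ lt)).
      by move=> x /List.in_app_iff []; [apply: Hls|apply: Hlt].
      move=> E; have [-> ->] : ls = [::] /\ lt = [::] by case: ls {Hls Hc} E => //; case: lt {Hlt}.
      by rewrite /=; lra.
    move=> [A [FA HA]].
    have [HTA _] := FP A FA.
    by apply: HTA => // x Hx; apply: HA; apply/List.in_app_iff; [left|right].
  case: (classic (exists A x, F A /\ A x)) => [[A [x [FA Ax]]]|N].
    right => y Gy; exists A => //.
    have [_ [E|sub]] := FP A FA; last by apply: sub.
    by rewrite E in Ax.
  left; apply: seteq => x; split => // -[A FA Ax]; apply: N; by exists A, x.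
have AG : forall x, G x -> A x.
  case: HA0 => // E; exfalso; apply: (Amax G); last by split => //; right.
  split; first by rewrite E.
  by move=> sub; have := sub _ GT; rewrite E.
have tot : forall X, exists v, A (X, v).
  move=> X; apply: NNPP => N.
  have N' : forall v, ~ A (X, v) by move=> v Av; apply: N; exists v.
  have [v Hv] := one_step HA (AG _ GT) N'.
  apply: (Amax (fun x => A x \/ x = (X, v))); last first.
    by split => //; right => x Gx; left; apply: AG.
  split; first by move=> x Ax; left.
  by move=> sub; apply: (N' v); apply: sub; right.
pose m X := proj1_sig (constructive_indefinite_description _ (tot X)).
have Am : forall X, A (X, m X) by move=> X; rewrite /m; case: (constructive_indefinite_description _ _).
exists m; split; last split.
- split; first by apply: (HT_fun HA (Am _)); apply: AG.
  split.
    move=> X _; have := HA [::] [:: (X, m X)].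
    have h : (forall x, List.In x [:: (X, m X)] -> A x) by move=> x [<-|].
    move=> /(_ ltac:(done) h ltac:(by move=> u; rewrite /cnt /=; lia)) /=; lra.
  move=> X Y _ _ D.
  have hc : forall u, cnt (map fst [:: (fun u => X u \/ Y u, m (fun u => X u \/ Y u))]) u =
                      cnt (map fst [:: (X, m X); (Y, m Y)]) u.
    move=> u; rewrite /cnt /=.
    case: (classic (X u)) => hx; case: (classic (Y u)) => hy.
    - by case: (D u).
    - by rewrite (pbT (or_introl hx : X u \/ Y u)) (pbT hx) (pbF hy).
    - by rewrite (pbT (or_intror hy : X u \/ Y u)) (pbF hx) (pbT hy).
    - by rewrite (pbF (P:=X u \/ Y u)) ?(pbF hx) ?(pbF hy) //; tauto.
  have i1 : forall x, List.In x [:: (fun u => X u \/ Y u, m (fun u => X u \/ Y u))] -> A x.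
    by move=> x [<-|].
  have i2 : forall x, List.In x [:: (X, m X); (Y, m Y)] -> A x by move=> x [<-|[<-|]].
  have := HA _ _ i1 i2 ltac:(by move=> u; rewrite hc).
  have := HA _ _ i2 i1 ltac:(by move=> u; rewrite hc).
  rewrite /=; lra.
- by move=> X BX; apply: (HT_fun HA (Am _)); apply: AG; left.
- by move=> X BX; apply: (HT_fun HA (Am _)); apply: AG; right.
Qed.

End Ext.

End ExtM.
Import ExtM.

Module FOM.


Section FO.
Variables (L : signature) (M : structure L).

Fixpoint trename (rho : nat -> nat) (t : term L M) : term L M :=
  match t with
  | tvar i => tvar L M (rho i)
  | tpar p => tpar L p
  | tapp f args => @tapp L M f (fun j => trename rho (args j))
  end.

Fixpoint frename (rho : nat -> nat) (phi : formula L M) : formula L M :=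
  match phi with
  | feq t1 t2 => feq (trename rho t1) (trename rho t2)
  | Defs.frel r args => @Defs.frel L M r (fun j => trename rho (args j))
  | fneg phi => fneg (frename rho phi)
  | fand phi psi => fand (frename rho phi) (frename rho psi)
  | fex i phi => fex (rho i) (frename rho phi)
  end.

Lemma eval_trename rho (s : nat -> M) t :
  eval_term s (trename rho t) = eval_term (fun j => s (rho j)) t.
Proof.
elim: t => [i|p|f args IH] //=; f_equal; apply: functional_extensionality => j; exact: IH.
Qed.

Lemma sat_frename rho (inj : injective rho) phi : forall (s : nat -> M),
  sat s (frename rho phi) <-> sat (fun j => s (rho j)) phi.
Proof.
elim: phi => [t1 t2|r args|phi IH|phi IH psi IH'|i phi IH] s /=.
- by rewrite !eval_trename.
- have -> : (fun j => eval_term s (trename rho (args j))) =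
            (fun j => eval_term (fun j => s (rho j)) (args j)).
    by apply: functional_extensionality => j; rewrite eval_trename.
  by [].
- by rewrite IH.
- by rewrite IH IH'.
- split => -[a Ha]; exists a.
    have := (IH _).1 Ha.
    have -> : (fun j => upd s (rho i) a (rho j)) = upd (fun j => s (rho j)) i a => //.
    by apply: functional_extensionality => j; rewrite /upd (inj_eq inj).
  apply/IH.
  have -> : (fun j => upd s (rho i) a (rho j)) = upd (fun j => s (rho j)) i a => //.
  by apply: functional_extensionality => j; rewrite /upd (inj_eq inj).
Qed.

Lemma tparams_mono (A B : M -> Prop) t : (forall p, A p -> B p) -> tparams_in A t -> tparams_in B t.
Proof. move=> AB; elim: t => [i|p|f args IH] //=; [exact: AB| move=> H j; exact: IH]. Qed.

Lemma fparams_mono (A B : M -> Prop) phi : (forall p, A p -> B p) -> fparams_in A phi -> fparams_in B phi.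
Proof.
move=> AB; elim: phi => [t1 t2|r args|phi IH|phi IH psi IH'|i phi IH] //=.
- by case=> h1 h2; split; apply: tparams_mono h1 || apply: tparams_mono h2.
- by move=> H j; apply: tparams_mono (H j).
- by case=> h1 h2; split; [apply: IH|apply: IH'].
Qed.

Lemma tparams_rename A rho t : tparams_in A t -> tparams_in A (trename rho t).
Proof. elim: t => [i|p|f args IH] //= H j; exact: IH. Qed.

Lemma fparams_rename A rho phi : fparams_in A phi -> fparams_in A (frename rho phi).
Proof.
elim: phi => [t1 t2|r args|phi IH|phi IH psi IH'|i phi IH] //=.
- by case=> h1 h2; split; apply: tparams_rename.
- by move=> H j; apply: tparams_rename.
- by case=> h1 h2; split; [apply: IH|apply: IH'].
Qed.

Fixpoint tpars (t : term L M) : seq M :=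
  match t with
  | tvar _ => [::]
  | tpar p => [:: p]
  | tapp f args => flatten [seq tpars (args j) | j <- enum 'I_(farity f)]
  end.

Fixpoint fpars (phi : formula L M) : seq M :=
  match phi with
  | feq t1 t2 => tpars t1 ++ tpars t2
  | Defs.frel r args => flatten [seq tpars (args j) | j <- enum 'I_(rarity r)]
  | fneg phi => fpars phi
  | fand phi psi => fpars phi ++ fpars psi
  | fex _ phi => fpars phi
  end.

Lemma in_flatten_map (I : finType) (F : I -> seq M) j p :
  List.In p (F j) -> List.In p (flatten [seq F i | i <- enum I]).
Proof.
move=> H; have : j \in enum I by rewrite mem_enum.
elim: (enum I) => [|i l IH] //=; rewrite in_cons => /orP [/eqP <-|/IH h].
  by apply/List.in_app_iff; left.
by apply/List.in_app_iff; right.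
Qed.

Lemma tpars_in t : tparams_in (fun p => List.In p (tpars t)) t.
Proof.
elim: t => [i|p|f args IH] //=; first by left.
move=> j; apply: tparams_mono (IH j) => p H; exact: in_flatten_map H.
Qed.

Lemma fpars_in phi : fparams_in (fun p => List.In p (fpars phi)) phi.
Proof.
elim: phi => [t1 t2|r args|phi IH|phi IH psi IH'|i phi IH] //=.
- split; [apply: tparams_mono (tpars_in t1)|apply: tparams_mono (tpars_in t2)] => p H;
  apply/List.in_app_iff; tauto.
- move=> j; apply: tparams_mono (tpars_in (args j)) => p H; exact: in_flatten_map H.
- split; [apply: fparams_mono IH|apply: fparams_mono IH'] => p H;
  apply/List.in_app_iff; tauto.
Qed.

Fixpoint exb (N k : nat) (phi : formula L M) : formula L M :=
  match k with 0 => phi | S k => fex N (exb N.+1 k phi) end.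

Definition updb (s : nat -> M) (N k : nat) (t : nat -> M) : nat -> M :=
  fun j => if (N <= j) && (j < N + k) then t (j - N) else s j.

Lemma fparams_exb A N k phi : fparams_in A phi -> fparams_in A (exb N k phi).
Proof. by elim: k N => [|k IH] N //= H; apply: IH. Qed.

Lemma sat_exb k : forall N phi (s : nat -> M),
  sat s (exb N k phi) <-> exists t, sat (updb s N k t) phi.
Proof.
elim: k => [|k IH] N phi s /=.
  have E : forall t, updb s N 0 t = s.
    by move=> t; apply: functional_extensionality => j; rewrite /updb addn0; case: ifP => //; lia.
  by split; [move=> H; exists s; rewrite E|case=> t; rewrite E].
split.
  case=> a /IH [t Ht]; exists (fun j => if j == 0 then a else t j.-1).
  have <- : updb (upd s N a) N.+1 k t = updb s N k.+1 (fun j => if j == 0 then a else t j.-1) => //.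
  apply: functional_extensionality => j; rewrite /updb /upd.
  repeat case: ifP; move=> *; try (exfalso; lia); try done.
  all: try (congr t; lia).
case=> t Ht; exists (t 0); apply/IH; exists (fun j => t j.+1).
have -> : updb (upd s N (t 0)) N.+1 k (fun j => t j.+1) = updb s N k.+1 t => //.
apply: functional_extensionality => j; rewrite /updb /upd.
repeat case: ifP; move=> *; try (exfalso; lia); try done.
all: try (congr t; lia).
Qed.


Definition restr p (s : nat -> M) : 'I_p -> M := fun i => s i.
Arguments restr p s _ : clear implicits.
Definition join p q (x : 'I_p -> M) (y : 'I_q -> M) : 'I_(p + q) -> M :=
  fun i => match fintype.split i with inl a => x a | inr b => y b end.
Definition ofI q (y : 'I_q -> M) (d : nat -> M) : nat -> M :=
  fun j => if (insub j : option 'I_q) is Some i then y i else d j.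

Lemma xpart_join p q (x : 'I_p -> M) (y : 'I_q -> M) : xpart (join x y) = x.
Proof.
apply: functional_extensionality => i; rewrite /xpart /join.
by have := unsplitK (inl i : 'I_p + 'I_q) => /= ->.
Qed.
Lemma ypart_join p q (x : 'I_p -> M) (y : 'I_q -> M) : ypart (join x y) = y.
Proof.
apply: functional_extensionality => i; rewrite /ypart /join.
by have := unsplitK (inr i : 'I_p + 'I_q) => /= ->.
Qed.
Lemma join_parts p q (a : 'I_(p + q) -> M) : join (xpart a) (ypart a) = a.
Proof.
apply: functional_extensionality => i; rewrite /join /xpart /ypart.
by case: splitP => j ij; congr a; apply: val_inj; rewrite /= ij.
Qed.
Lemma restr_ofI q (y : 'I_q -> M) d : restr q (ofI y d) = y.
Proof. by apply: functional_extensionality => i; rewrite /restr /ofI valK. Qed.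
Lemma restr_updb p q s t : restr (p + q) (updb s p q t) = join (restr p s) (restr q t).
Proof.
apply: functional_extensionality => i; rewrite /restr /join /updb.
case: splitP => j ij; rewrite ij; have := ltn_ord j => hj.
  by rewrite ifF //; apply/negbTE; lia.
by rewrite ifT; [congr t; lia|apply/andP; split; lia].
Qed.

Lemma def_True p (A : M -> Prop) : definable (n := p) A (fun _ => True).
Proof. by exists (feq (tvar L M 0) (tvar L M 0)); split. Qed.

Lemma def_neg p (A : M -> Prop) X : definable (n := p) A X -> definable A (fun a => ~ X a).
Proof. by case=> phi [Hp H]; exists (fneg phi); split => // s /=; rewrite H. Qed.

Lemma def_and p (A : M -> Prop) X Y : definable (n := p) A X -> definable A Y ->
  definable A (fun a => X a /\ Y a).
Proof.
case=> phi [Hp H]; case=> psi [Hq H']; exists (fand phi psi); split => // s /=.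
by rewrite H H'.
Qed.

Lemma def_mono p (A B : M -> Prop) X : (forall x, A x -> B x) ->
  definable (n := p) A X -> definable B X.
Proof. by move=> AB [phi [Hp H]]; exists phi; split => //; apply: fparams_mono Hp. Qed.

Lemma def_ext p (A : M -> Prop) X Y : (forall a, X a <-> Y a) ->
  definable (n := p) A X -> definable A Y.
Proof. by move=> XY [phi [Hp H]]; exists phi; split => // s; rewrite -XY. Qed.

Lemma def_proj p q (A : M -> Prop) P : definable (n := p + q) A P ->
  definable (n := p) A (fun x => exists y, P (join x y)).
Proof.
case=> phi [Hp H]; exists (exb p q phi); split; first exact: fparams_exb.
move=> s; rewrite sat_exb; split.
  case=> y Py; exists (ofI y s); apply/H.
  change (P (restr (p + q) (updb s p q (ofI y s)))).
  by rewrite (restr_updb p q s (ofI y s)) restr_ofI.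
case=> t /H Pt; change (P (restr (p + q) (updb s p q t))) in Pt.
move: Pt; rewrite (restr_updb p q s t) => Pt.
by exists (restr q t).
Qed.

Lemma def_reindex p q (sigma : 'I_p -> 'I_q) (A : M -> Prop) X : injective sigma ->
  definable (n := p) A X -> definable (n := q) A (fun a => X (fun i => a (sigma i))).
Proof.
move=> inj [phi [Hp H]].
pose rho j := if (insub j : option 'I_p) is Some i then val (sigma i) else (j + q)%nat.
have rinj : injective rho.
  move=> j1 j2; rewrite /rho.
  case: insubP => [i1 _ e1|_]; case: insubP => [i2 _ e2|_] //.
  - by move/val_inj/inj => e; rewrite -e1 -e2 e.
  - by move=> e; have := ltn_ord (sigma i1); rewrite e; lia.
  - by move=> e; have := ltn_ord (sigma i2); rewrite -e; lia.
  - by move=> e; lia.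
exists (frename rho phi); split; first exact: fparams_rename.
move=> s; rewrite sat_frename // -H.
have -> : (fun i : 'I_p => s (rho i)) = (fun i => s (sigma i)) => //.
by apply: functional_extensionality => i; rewrite /rho valK.
Qed.

End FO.

End FOM.
Import FOM.

Module SmallM.


Section Small.
Variables (L : signature) (M : structure L).

Fixpoint cidx (p : M) (l : seq M) : nat :=
  match l with [::] => 0%nat | x :: l => if pb (x = p) then 0%nat else (cidx p l).+1 end.

Lemma cidx_lt p l : List.In p l -> (cidx p l < size l)%nat.
Proof.
elim: l => [|x l IH] //= H; case: (classic (x = p)) => E; first by rewrite pbT.
rewrite pbF //; case: H => // /IH; lia.
Qed.

Lemma cidx_inj p p' l : List.In p l -> List.In p' l -> cidx p l = cidx p' l -> p = p'.
Proof.
elim: l => [|x l IH] //= H H'.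
case: (classic (x = p)) => E; case: (classic (x = p')) => E'.
- by rewrite -E -E'.
- by rewrite pbT // pbF.
- by rewrite pbF // pbT.
- rewrite !pbF // => -[]; apply: IH; [case: H|case: H'] => //.
Qed.

Lemma sumn_ge (c : M -> nat) p l : List.In p l -> (c p <= sumn (map c l))%nat.
Proof. elim: l => [|x l IH] //= [->|/IH]; lia. Qed.

Lemma small_add (K : Type) (e : nat -> K) (einj : injective e) (A : M -> Prop) (l : seq M) :
  small K A -> small K (fun p => A p \/ List.In p l).
Proof.
move=> sA [h [hinj hA]]; apply: sA.
pose c (p : M) : nat := match excluded_middle_informative (exists i, h (e i) = p) with
  | left H => proj1_sig (constructive_indefinite_description _ H) | right _ => 0%nat end.
pose i0 := (sumn (map c l)).+1.
have good : forall i, (i0 <= i)%nat -> A (h (e i)).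
  move=> i hi; case: (hA (e i)) => // Hin; exfalso.
  have hle := sumn_ge c Hin.
  have hc : c (h (e i)) = i.
    rewrite /c; case: excluded_middle_informative => [H|[]]; last by exists i.
    case: (constructive_indefinite_description _ H) => /= i' Hi'.
    by apply: einj; apply: hinj.
  rewrite hc in hle; rewrite /i0 in hi; lia.
pose phi (k : K) : K :=
  match excluded_middle_informative (A (h k)) with
  | right _ => e (i0 + cidx (h k) l)%nat
  | left _ => match excluded_middle_informative (exists i, k = e (i0 + i)%nat) with
     | left H => e (i0 + size l + proj1_sig (constructive_indefinite_description _ H))%nat
     | right _ => k end end.
have phi_spec : forall k, (~ A (h k) /\ phi k = e (i0 + cidx (h k) l)%nat) \/
   (A (h k) /\ exists i, k = e (i0 + i)%nat /\ phi k = e (i0 + size l + i)%nat) \/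
   (A (h k) /\ (~ exists i, k = e (i0 + i)%nat) /\ phi k = k).
  move=> k; rewrite /phi.
  destruct (excluded_middle_informative (A (h k))) as [a|a]; last by left.
  destruct (excluded_middle_informative (exists i, k = e (i0 + i)%nat)) as [b|b]; last by right; right.
  destruct (constructive_indefinite_description _ b) as [i E]; simpl.
  by right; left; split => //; exists i.
have inl : forall k, ~ A (h k) -> List.In (h k) l by move=> k nA; case: (hA k).
exists (fun k => h (phi k)); split.
  move=> k1 k2 /hinj.
  case: (phi_spec k1) => [[a1 ->]|[[a1 [i1 [E1 ->]]]|[a1 [b1 ->]]]];
  case: (phi_spec k2) => [[a2 ->]|[[a2 [i2 [E2 ->]]]|[a2 [b2 ->]]]].
  - move/einj => E; apply: hinj; apply: cidx_inj; [exact: inl|exact: inl|lia].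
  - move/einj => E; have := cidx_lt (inl _ a1); lia.
  - by move=> E; exfalso; apply: b2; exists (cidx (h k1) l); rewrite E.
  - move/einj => E; have := cidx_lt (inl _ a2); lia.
  - by move/einj => E; rewrite E1 E2; congr e; lia.
  - by move=> E; exfalso; apply: b2; exists (size l + i1)%nat; rewrite -E; congr e; lia.
  - by move=> E; exfalso; apply: b1; exists (cidx (h k2) l); rewrite -E.
  - by move=> E; exfalso; apply: b1; exists (size l + i2)%nat; rewrite E; congr e; lia.
  - by [].
move=> k; case: (phi_spec k) => [[a1 ->]|[[a1 [i1 [E1 ->]]]|[a1 [b1 ->]]]] //;
  apply: good; lia.
Qed.

End Small.

End SmallM.
Import SmallM.

Module MainM.


Section Main.
Variables (L : signature) (M : structure L).
Local Open Scope R_scope.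

Lemma keisler_Meas p (C : M -> Prop) (mu : (('I_p -> M) -> Prop) -> R) :
  keisler C mu -> Meas (fun X => definable C X) mu.
Proof. by case=> [H0 [H1 [_ HA]]]; split => //; split. Qed.

Lemma Alg_def p (C : M -> Prop) : Alg (fun X : ('I_p -> M) -> Prop => definable C X).
Proof. split; [exact: def_True| split; [exact: def_neg | exact: def_and]]. Qed.

Lemma Alg_all (U : Type) : Alg (fun _ : U -> Prop => True).
Proof. by []. Qed.

Lemma Meas_keisler p (C : M -> Prop) (m : (('I_p -> M) -> Prop) -> R) :
  Meas (fun _ => True) m -> keisler C m.
Proof.
case=> [H1 [H0 HA]]; split; first by move=> X _; exact: H0.
split => //; split; first by move=> X Y _ _ E; congr m; exact: seteq.
by move=> X Y _ _ D; exact: HA.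
Qed.

Lemma inhabited_of_keisler p (C : M -> Prop) (nu : (('I_p -> M) -> Prop) -> R) :
  keisler C nu -> exists y : 'I_p -> M, True.
Proof.
case=> [H0 [H1 [_ HA]]]; apply: NNPP => N.
have E : forall (X : ('I_p -> M) -> Prop), X = (fun _ => False).
  by move=> X; apply: seteq => a; split => // _; apply: N; exists a.
have h := HA _ _ (def_neg (def_True p C)) (def_neg (def_True p C)) ltac:(by move=> a []).
rewrite (E (fun a => ~ True \/ ~ True)) (E (fun a => ~ True)) in h.
rewrite (E (fun _ => True)) in H1; lra.
Qed.

Theorem main_thm (K : Type)
    (HM : monster M K) (n m k : nat)
    (mu : (('I_n -> M) -> Prop) -> R) (nu : (('I_m -> M) -> Prop) -> R)
    (f : ('I_m -> M) -> ('I_k -> M)) :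
  keisler (@setTM L M) mu -> keisler (@setTM L M) nu -> definable_map f ->
  keisler_ge K mu nu -> keisler_ge K mu (pushforward f nu).
Proof.
move=> Hmu Hnu [phiG [HpG HG]] [A [sA [lam [Hlam [Hcyl Hge]]]]].
have [[e einj] _] := HM.
have [y0 _] := inhabited_of_keisler Hnu.
pose Gph := fun a : 'I_(m + k) -> M => forall j, f (xpart a) j = ypart a j.
pose A' := fun p => A p \/ List.In p (fpars phiG).
have dG : definable A' Gph.
  exists phiG; split => //; apply: fparams_mono (fpars_in phiG) => p H; by right.
have dGT : definable (@setTM L M) Gph by exists phiG.
have Gjoin : forall y z, Gph (join y z) <-> f y = z.
  move=> y z; rewrite /Gph xpart_join ypart_join; split.
    by move=> H; apply: functional_extensionality.
  by move=> ->.
have AA' : forall p, A p -> A' p by move=> p; left.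
have AT : forall p, A' p -> (@setTM L M) p by [].
pose B2 := fun b : ('I_(n + m) -> M) -> Prop => exists X, definable (@setTM L M) X /\ b = cylx (m := m) X.
pose m2 := fun b : ('I_(n + m) -> M) -> Prop => mu (fun x => b (join x y0)).
have m2cyl : forall X, m2 (cylx X) = mu X.
  move=> X; rewrite /m2 /cylx; congr mu; apply: functional_extensionality => x.
  by rewrite xpart_join.
have AlgB2 : Alg B2.
  split; first by exists (fun _ => True); split => //; exact: def_True.
  split; first by move=> _ [X [dX ->]]; exists (fun x => ~ X x); split => //; exact: def_neg.
  by move=> _ _ [X [dX ->]] [Y [dY ->]]; exists (fun x => X x /\ Y x); split => //; exact: def_and.
have MeasB2 : Meas B2 m2.
  split; first by case: Hmu => _ [].
  split; first by move=> _ [X [dX ->]]; rewrite m2cyl; case: Hmu => H0 _; apply: H0.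
  move=> _ _ [X [dX ->]] [Y [dY ->]] D.
  have -> : (fun u => cylx X u \/ cylx Y u) = cylx (fun x => X x \/ Y x) by [].
  rewrite !m2cyl; case: Hmu => _ [_ [_ HA]]; apply: HA => // x [Xx Yx].
  by apply: (D (join x y0)); rewrite /cylx xpart_join.
have compat1 : forall D Y, definable A D -> B2 Y -> (forall u, D u -> Y u) -> lam D <= m2 Y.
  move=> D _ dD [X [dX ->]] sub; rewrite m2cyl.
  pose piD := fun x : 'I_n -> M => exists y, D (join x y).
  have dpi : definable A piD := def_proj dD.
  have dcyl : definable A (cylx (m := m) piD) := def_reindex (@lshift_inj n m) dpi.
  apply: Rle_trans (MeasMono (Alg_def _ _) (keisler_Meas Hlam) dD dcyl _) _.
    by move=> a Da; exists (ypart a); rewrite join_parts.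
  rewrite Hcyl //.
  apply: (MeasMono (Alg_def _ _) (keisler_Meas Hmu) (def_mono _ dpi) dX) => //.
  by move=> x [y Dy]; have := sub _ Dy; rewrite /cylx xpart_join.
have [w0 [Hw0 [Hw0_1 Hw0_2]]] := ext_thm (Alg_def _ _) AlgB2 (keisler_Meas Hlam) MeasB2 compat1.
have w0cyl : forall X, definable (@setTM L M) X -> w0 (cylx X) = mu X.
  by move=> X dX; rewrite Hw0_2 ?m2cyl //; exists X.
pose pre := fun (Z : ('I_(n + k) -> M) -> Prop) (a : 'I_(n + m) -> M) =>
  Z (join (xpart a) (f (ypart a))).
pose img := fun (b : ('I_(n + m) -> M) -> Prop) (c : 'I_(n + k) -> M) =>
  exists y, b (join (xpart c) y) /\ f y = ypart c.
pose Im := img (fun _ => True).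
have pre_pt : forall c y, f y = ypart c -> forall Z, pre Z (join (xpart c) y) <-> Z c.
  by move=> c y Hy Z; rewrite /pre xpart_join ypart_join Hy join_parts.
have preIm : pre Im = (fun _ => True).
  apply: seteq => a; split => // _; exists (ypart a); split => //.
  by rewrite ypart_join.
have F1 : forall Z, img (pre Z) = (fun c => Z c /\ Im c).
  move=> Z; apply: seteq => c; split.
    by case=> y [Py Hy]; split; [apply/(pre_pt _ _ Hy)|exists y].
  by case=> Zc [y [_ Hy]]; exists y; split => //; apply/(pre_pt _ _ Hy).
have F3 : forall (D : ('I_(n + m) -> M) -> Prop) a, D a -> pre (img D) a.
  by move=> D a Da; rewrite /pre /img; exists (ypart a); rewrite xpart_join ypart_join join_parts.
have F4 : forall (D : ('I_(n + m) -> M) -> Prop) Z, (forall a, D a -> pre Z a) ->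
    forall c, img D c -> Z c /\ Im c.
  move=> D Z sub c [y [Dy Hy]]; split; last by exists y.
  by apply/(pre_pt _ _ Hy); apply: sub.
pose s1 := fun i : 'I_(n + m) => match fintype.split i with
  | inl a => lshift m (lshift k a) | inr b => rshift (n + k) b end.
pose s2 := fun i : 'I_(m + k) => match fintype.split i with
  | inl a => rshift (n + k) a | inr b => lshift m (rshift n b) end.
have s1eq : forall e : 'I_(n + k + m) -> M, (fun i => e (s1 i)) = join (xpart (xpart e)) (ypart e).
  by move=> e'; apply: functional_extensionality => i; rewrite /s1 /join; case: (fintype.split i).
have s2eq : forall e : 'I_(n + k + m) -> M, (fun i => e (s2 i)) = join (ypart e) (ypart (xpart e)).
  by move=> e'; apply: functional_extensionality => i; rewrite /s2 /join; case: (fintype.split i).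
have s1inj : injective s1.
  move=> i j; rewrite /s1; case: (splitP i) => [a ia|a ia]; case: (splitP j) => [b jb|b jb];
  move/(congr1 val) => /= h; apply: ord_inj; rewrite ia jb;
  have := ltn_ord a; have := ltn_ord b; lia.
have s2inj : injective s2.
  move=> i j; rewrite /s2; case: (splitP i) => [a ia|a ia]; case: (splitP j) => [b jb|b jb];
  move/(congr1 val) => /= h; apply: ord_inj; rewrite ia jb;
  have := ltn_ord a; have := ltn_ord b; lia.
have dimg : forall D, definable A D -> definable A' (img D).
  move=> D dD.
  pose E := fun e : 'I_(n + k + m) -> M =>
    D (join (xpart (xpart e)) (ypart e)) /\ Gph (join (ypart e) (ypart (xpart e))).
  have dE : definable A' E.
    apply: def_and.
      apply: def_ext (def_reindex s1inj (def_mono AA' dD)) => a.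
      by rewrite s1eq.
    apply: def_ext (def_reindex s2inj dG) => a.
    by rewrite s2eq.
  apply: def_ext (def_proj dE) => c; rewrite /E /img.
  split; first by case=> y; rewrite !xpart_join !ypart_join Gjoin => H; exists y.
  by case=> y H; exists y; rewrite !xpart_join !ypart_join Gjoin.
have dWf : forall W, definable (@setTM L M) W -> definable (@setTM L M) (fun b : 'I_m -> M => W (f b)).
  move=> W dW.
  pose E := fun e : 'I_(m + k) -> M => Gph e /\ W (ypart e).
  have dE : definable (@setTM L M) E.
    by apply: def_and => //; exact: def_reindex (@rshift_inj m k) dW.
  apply: def_ext (def_proj dE) => y; rewrite /E; split.
    by case=> z; rewrite ypart_join Gjoin => -[<-].
  by move=> H; exists (f y); rewrite ypart_join Gjoin.
have dcylx : forall X, definable (@setTM L M) X -> definable (@setTM L M) (cylx (n := n) (m := k) X).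
  by move=> X dX; exact: def_reindex (@lshift_inj n k) dX.
have dcyly : forall W, definable (@setTM L M) W -> definable (@setTM L M) (cyly (n := n) (m := k) W).
  by move=> W dW; exact: def_reindex (@rshift_inj n k) dW.
pose lam' := fun Z => w0 (pre Z).
exists A'; split; first exact: (small_add einj sA).
exists lam'; split.
  apply: Meas_keisler; split; first by case: Hw0.
  split; first by move=> X _; case: Hw0 => _ [H0 _]; apply: H0.
  move=> X Y _ _ D; case: Hw0 => _ [_ HA]; apply: HA => // a; exact: D.
split.
  move=> X dX; rewrite /lam'.
  have -> : pre (cylx X) = cylx X.
    by apply: functional_extensionality => a; rewrite /pre /cylx xpart_join.
  by apply: w0cyl; apply: def_mono dX.
move=> w' Hw' Hw'lam Hw'cyl W dW.
have Mw' := keisler_Meas Hw'.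
have dIm : definable A' Im := dimg _ (def_True _ _).
have dImT : definable (@setTM L M) Im := def_mono AT dIm.
have w'Im : w' Im = 1.
  by rewrite Hw'lam // /lam' preIm; case: Hw0.
have full : forall Z, definable (@setTM L M) Z -> w' (fun c => Z c /\ Im c) = w' Z.
  move=> Z dZ.
  have d1 : definable (@setTM L M) (fun c => Z c /\ Im c) by apply: def_and.
  have d2 : definable (@setTM L M) (fun c => Z c /\ ~ Im c) by apply: def_and => //; apply: def_neg.
  have := (Mw'.2.2 _ _ d1 d2 ltac:(by move=> c [[_ h1] [_ h2]])).
  have -> : (fun u => (Z u /\ Im u) \/ (Z u /\ ~ Im u)) = Z.
    by apply: seteq => c; case: (classic (Im c)); tauto.
  have h0 := Mw'.2.1 _ d2.
  have h1 := MeasMono (Alg_def _ _) Mw' d2 (def_neg dImT) (fun c (h : Z c /\ ~ Im c) => h.2).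
  rewrite (MeasC (Alg_def _ _) Mw' dImT) w'Im in h1.
  lra.
pose B2' := fun b : ('I_(n + m) -> M) -> Prop => exists Z, definable (@setTM L M) Z /\ b = pre Z.
pose m2' := fun b => w' (img b).
have m2'pre : forall Z, m2' (pre Z) = w' (fun c => Z c /\ Im c) by move=> Z; rewrite /m2' F1.
have AlgB2' : Alg B2'.
  split; first by exists (fun _ => True); split => //; exact: def_True.
  split; first by move=> _ [X [dX ->]]; exists (fun x => ~ X x); split => //; exact: def_neg.
  by move=> _ _ [X [dX ->]] [Y [dY ->]]; exists (fun x => X x /\ Y x); split => //; exact: def_and.
have MeasB2' : Meas B2' m2'.
  split; first exact: w'Im.
  split; first by move=> _ [Z [dZ ->]]; rewrite m2'pre; apply: Mw'.2.1; apply: def_and.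
  move=> _ _ [Z [dZ ->]] [Z' [dZ' ->]] D.
  have -> : (fun u => pre Z u \/ pre Z' u) = pre (fun c => Z c \/ Z' c) by [].
  rewrite !m2'pre.
  have -> : (fun c => (Z c \/ Z' c) /\ Im c) = (fun c => (Z c /\ Im c) \/ (Z' c /\ Im c)).
    by apply: seteq => c; tauto.
  apply: Mw'.2.2; try by apply: def_and.
  move=> c [[Zc [y [_ Hy]]] [Z'c _]].
  by apply: (D (join (xpart c) y)); split; apply/(pre_pt _ _ Hy).
have compat2 : forall D Y, definable A D -> B2' Y -> (forall u, D u -> Y u) -> lam D <= m2' Y.
  move=> D _ dD [Z [dZ ->]] sub; rewrite m2'pre -Hw0_1 //.
  apply: Rle_trans (MeasMono (Alg_all _) Hw0 I I (F3 D)) _.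
  have -> : w0 (pre (img D)) = w' (img D) by rewrite Hw'lam //; exact: dimg.
  apply: (MeasMono (Alg_def _ _) Mw' (def_mono AT (dimg _ dD))) => //.
    by apply: def_and.
  exact: F4 sub.
have [w [Hw [HwB1 HwB2]]] := ext_thm (Alg_def _ _) AlgB2' (keisler_Meas Hlam) MeasB2' compat2.
have HY := Hge w (Meas_keisler _ Hw) HwB1.
have {}HY : forall Y, definable (@setTM L M) Y -> w (cyly Y) = nu Y.
  apply: HY => X dX.
  have -> : cylx (m := m) X = pre (cylx X).
    by apply: functional_extensionality => a; rewrite /pre /cylx xpart_join.
  rewrite HwB2; last by exists (cylx X); split => //; apply: dcylx.
  by rewrite m2'pre full ?Hw'cyl //; apply: dcylx.
rewrite /pushforward -(HY _ (dWf _ dW)).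
have -> : cyly (n := n) (fun b => W (f b)) = pre (cyly W).
  by apply: functional_extensionality => a; rewrite /pre /cyly ypart_join.
rewrite HwB2; last by exists (cyly W); split => //; apply: dcyly.
by rewrite m2'pre full //; apply: dcyly.
Qed.

End Main.

End MainM.
Import MainM.

Theorem corollary3p14 (L : signature) (M : structure L) (K : Type)
    (HM : monster M K) (n m k : nat)
    (mu : (('I_n -> M) -> Prop) -> R) (nu : (('I_m -> M) -> Prop) -> R)
    (f : ('I_m -> M) -> ('I_k -> M)) :
  keisler (@setTM L M) mu -> keisler (@setTM L M) nu -> definable_map f ->
  keisler_ge K mu nu -> keisler_ge K mu (pushforward f nu).
Proof. exact: (@main_thm L M K HM n m k mu nu f). Qed.
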